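(* Let $k,t\ge1$ be integers and let $D$ be a digraph with $\mathrm{dtw}(D)<k$. Then either $D$ contains $t$ pairwise vertex-disjoint even dicycles, or there exists a set $A\subseteq V(D)$ with $|A|\le k(t-1)$ such that $D-A$ contains no even dicycle.
   Context: A dicycle is even if it has an even number of edges. An arborescence is a rooted tree with all edges oriented away from the root; $T_t$ denotes the subarborescence rooted at $t$. $Y$ strongly guards $X$ (for $X,Y\subseteq V(D)$) if every directed walk starting and ending in $X$ and containing a vertex outside $X$ contains a vertex of $Y$. A directed tree decomposition of $D$ is $(T,\beta,\gamma)$ with $T$ an arborescence, $\beta\colon V(T)\to2^{V(D)}$ such that the nonempty bags $\beta(t)$ partition $V(D)$, and $\gamma\colon E(T)\to 2^{V(D)}$ such that for each $(d,t)\in E(T)$, $\gamma(d,t)$ strongly guards $\bigcup_{t'\in V(T_t)}\beta(t')$. With $\Gamma(t):=\beta(t)\cup\bigcup_{e\text{ incident with }t}\gamma(e)$, the width is $\max_t|\Gamma(t)|-1$, and the directed treewidth $\mathrm{dtw}(D)$ is the minimum width of a directed tree decomposition of $D$. *)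

(* Defs.v *)
(* A digraph D is a finite type V of vertices with an edge
   relation E : rel V (loops / antiparallel edges allowed; parallel edges are
   irrelevant for all notions below). *)
From mathcomp Require Import all_boot.
Set Implicit Arguments. Unset Strict Implicit. Unset Printing Implicit Defensive.

Section Digraphs.
Variable V : finType.
Variable E : rel V.

(* A dicycle: a nonempty duplicate-free vertex sequence v0 ... v_{n-1} with
   edges v_i -> v_{i+1} and v_{n-1} -> v0.  Its number of edges is size s. *)
Definition dicycle (s : seq V) : Prop := [/\ s != [::], uniq s & cycle E s].

Definition even_dicycle (s : seq V) : Prop := dicycle s /\ ~~ odd (size s).

Definition del_rel (A : {set V}) : rel V :=
  fun u v => [&& E u v, u \notin A & v \notin A].

Definition strongly_guards (Y X : {set V}) : Prop :=
  forall (x : V) (p : seq V), path E x p ->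
    x \in X -> last x p \in X -> has (fun v => v \notin X) (x :: p) ->
    has (fun v => v \in Y) (x :: p).
End Digraphs.

Definition arborescence (VT : finType) (ET : rel VT) (r : VT) : Prop :=
  [/\ forall d, ~~ ET d r,
      forall t, t != r -> #|[set d | ET d t]| = 1
    & forall t, connect ET r t].

Definition subarb (VT : finType) (ET : rel VT) (t : VT) : {set VT} :=
  [set t' | connect ET t t'].

Definition is_dtd (V : finType) (E : rel V) (VT : finType) (ET : rel VT)
  (r : VT) (beta : VT -> {set V}) (gamma : VT -> VT -> {set V}) : Prop :=
  [/\ arborescence ET r,
      (forall v : V, exists! t : VT, v \in beta t)
    & forall d t, ET d t ->
        strongly_guards E (gamma d t) (\bigcup_(t' in subarb ET t) beta t')].

Definition Gamma (V : finType) (VT : finType) (ET : rel VT)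
  (beta : VT -> {set V}) (gamma : VT -> VT -> {set V}) (t : VT) : {set V} :=
  beta t :|: (\bigcup_(d | ET d t) gamma d t) :|: (\bigcup_(c | ET t c) gamma t c).

Definition dtd_width (V : finType) (VT : finType) (ET : rel VT)
  (beta : VT -> {set V}) (gamma : VT -> VT -> {set V}) : nat :=
  (\max_(t : VT) #|Gamma ET beta gamma t|) - 1.

(* dtw(D) < k, i.e. (dtw being a minimum) some directed tree decomposition
   of D has width < k. *)
Definition dtw_lt (V : finType) (E : rel V) (k : nat) : Prop :=
  exists (VT : finType) (ET : rel VT) (r : VT) (beta : VT -> {set V})
         (gamma : VT -> VT -> {set V}),
    is_dtd E ET r beta gamma /\ dtd_width ET beta gamma < k.

(* Main.v *)
Require Import Defs.
From mathcomp Require Import all_boot.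
From Stdlib Require Import Classical.
Set Implicit Arguments. Unset Strict Implicit. Unset Printing Implicit Defensive.

Lemma disjP (T : finType) (A B : {pred T}) :
  reflect (forall x, x \in A -> x \in B -> False) [disjoint A & B].
Proof.
apply: (iffP pred0P) => H.
  move=> x xA xB; have := H x; rewrite /= xA xB //.
move=> x /=; apply/negbTE/andP => -[]; exact: H.
Qed.

Lemma connect_first (T : finType) (e : rel T) u v :
  connect e u v -> u != v -> exists c, e u c /\ connect e c v.
Proof.
move/connectP=> [[|c p] /= Hp ->]; first by rewrite eqxx.
move: Hp => /andP[euc Hp] _; exists c; split=> //.
by apply/connectP; exists p.
Qed.

Lemma connect_last (T : finType) (e : rel T) w x :
  connect e w x -> w = x \/ exists y, connect e w y /\ e y x.
Proof.
move/connectP=> [p Hp ->]; case/lastP: p Hp => [|q y]; first by left.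
rewrite rcons_path last_rcons => /andP[Hq Hy]; right.
exists (last w q); split=> //; by apply/connectP; exists q.
Qed.

Lemma arb_acyclic (VT : finType) (ET : rel VT) r u w :
  arborescence ET r -> ET u w -> connect ET w u -> False.
Proof.
move=> [Hr H1 Hc].
have claim : forall p, path ET r p -> forall w, ET (last r p) w ->
    connect ET w (last r p) -> False.
  elim/last_ind => [|q x IH] /=.
    move=> _ w0 erw /connect_last [wr|[y [_ eyr]]].
      by subst w0; move: (Hr r); rewrite erw.
    by move: (Hr y); rewrite eyr.
  rewrite rcons_path last_rcons => /andP[Hq ex] w0 exw Hw.
  have xr : x != r by apply/eqP => xr; move: ex; rewrite xr (negbTE (Hr _)).
  have [y [cxy eyx]] : exists y, connect ET x y /\ ET y x.
    case: (connect_last Hw) => [wx|[y [cwy eyx]]].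
      by exists x; split => //; rewrite -{2}wx.
    exists y; split => //; exact: connect_trans (connect1 exw) cwy.
  move: (H1 x xr) => /eqP /cards1P [a Ha].
  have : y \in [set d | ET d x] by rewrite inE.
  have : last r q \in [set d | ET d x] by rewrite inE.
  rewrite Ha !inE => /eqP e1 /eqP e2.
  apply: (IH Hq x); first by [].
  by rewrite e1 -e2.
move=> euw cwu; move: (Hc u) => /connectP [p Hp eu].
by apply: (claim p Hp w); rewrite -eu.
Qed.

Section Main.
Variables (V : finType) (E : rel V) (k : nat).
Variables (VT : finType) (ET : rel VT) (r : VT) (beta : VT -> {set V})
  (gamma : VT -> VT -> {set V}).
Hypothesis Hd : is_dtd E ET r beta gamma.
Hypothesis Hw : dtd_width ET beta gamma < k.

Definition ok (B : {set V}) (s : seq V) :=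
  even_dicycle E s /\ (forall x, x \in s -> x \notin B).

Definition Xs u := \bigcup_(t' in subarb ET u) beta t'.

Lemma cycle_walk s x : dicycle E s -> x \in s ->
  exists p, [/\ path E x p, last x p = x & x :: p =i s].
Proof.
move=> [_ _ Hc] xs; case: (rot_to xs) => i s' Hr.
have : cycle E (x :: s') by rewrite -Hr rot_cycle.
rewrite /= => Hp; exists (rcons s' x); split => //; first by rewrite last_rcons.
move=> y; rewrite -(mem_rot i s) Hr !inE mem_rcons inE.
by case: (y == x).
Qed.

Lemma guard_incl (Y X : {set V}) s x :
  strongly_guards E Y X -> dicycle E s -> (forall y, y \in s -> y \notin Y) ->
  x \in s -> x \in X -> {subset s <= X}.
Proof.
move=> Hg Hs HY xs xX y ys; apply/negPn/negP => yX.
have [p [Hp Hl Hm]] := cycle_walk Hs xs.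
have := Hg x p Hp xX; rewrite Hl => /(_ xX).
have -> : has (fun v => v \notin X) (x :: p).
  by apply/hasP; exists y => //; rewrite Hm.
move=> /(_ isT) /hasP [v vp vY].
by move: (HY v); rewrite -Hm vp vY => /(_ isT).
Qed.

Lemma Gamma_le u : #|Gamma ET beta gamma u| <= k.
Proof.
move: Hw; rewrite /dtd_width.
have := leq_bigmax (F := fun t => #|Gamma ET beta gamma t|) u.
move=> /= H1 H2.
have : #|Gamma ET beta gamma u| - 1 < k.
  apply: leq_ltn_trans H2; exact: leq_sub2r.
case: #|Gamma ET beta gamma u| => //= n; by rewrite subn1.
Qed.

Lemma sub_Gamma_beta u : beta u \subset Gamma ET beta gamma u.
Proof. by rewrite /Gamma -setUA subsetUl. Qed.

Lemma sub_Gamma_in d u : ET d u -> gamma d u \subset Gamma ET beta gamma u.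
Proof.
move=> H; rewrite /Gamma; apply: subset_trans (subsetUl _ _).
apply: subset_trans (subsetUr _ _); exact: (bigcup_sup d H).
Qed.

Lemma sub_Gamma_out u c : ET u c -> gamma u c \subset Gamma ET beta gamma u.
Proof.
move=> H; rewrite /Gamma; apply: subset_trans (subsetUr _ _).
exact: (bigcup_sup c H).
Qed.

Lemma Xs_root : Xs r = setT.
Proof.
case: Hd => [[_ _ Hc] Hp _].
apply/setP => v; rewrite inE; have [t [Ht _]] := Hp v.
by apply/bigcupP; exists t => //; rewrite inE.
Qed.

Lemma key B : (exists s, ok B s) ->
  exists (X G : {set V}), [/\ #|G| <= k, (exists s, ok B s /\ {subset s <= X})
     & forall s, ok (B :|: G) s -> forall x, x \in s -> x \notin X].
Proof.
case: Hd => [Harb Hpart Hg].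
move=> [s0 Hs0].
pose P u := exists s, ok B s /\ {subset s <= Xs u}.
have Pr : P r by exists s0; split => // x _; rewrite Xs_root inE.
suff : forall n u, #|subarb ET u| <= n -> P u ->
  exists (X G : {set V}), [/\ #|G| <= k, (exists s, ok B s /\ {subset s <= X})
     & forall s, ok (B :|: G) s -> forall x, x \in s -> x \notin X].
  by move=> /(_ _ r (leqnn _) Pr).
elim=> [|n IH] u Hn Pu.
  by move: Hn; rewrite leqn0 => /eqP/card0_eq/(_ u); rewrite inE connect0.
case: (classic (exists c, ET u c /\ P c)) => [[c [euc Pc]]|Hno].
  apply: (IH c) => //.
  rewrite -ltnS; apply: leq_trans Hn; apply: proper_card; apply/properP; split.
    apply/subsetP => y; rewrite !inE; exact: connect_trans (connect1 euc).
  exists u; first by rewrite inE connect0.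
  rewrite inE; apply/negP => cu; exact: arb_acyclic Harb euc cu.
exists (Xs u), (Gamma ET beta gamma u); split => //; first exact: Gamma_le.
move=> s [Hs Hav] x xs; apply/negP => xX.
have HG : forall y, y \in s -> y \notin Gamma ET beta gamma u.
  by move=> y ys; move: (Hav y ys); rewrite inE negb_or => /andP[].
have HB : forall y, y \in s -> y \notin B.
  by move=> y ys; move: (Hav y ys); rewrite inE negb_or => /andP[].
have HGsub : forall Y : {set V}, Y \subset Gamma ET beta gamma u ->
    forall y, y \in s -> y \notin Y.
  move=> Y sY y ys; apply/negP => yY.
  by move: (HG y ys); rewrite (subsetP sY y yY).
move: xX => /bigcupP [t' Ht' xt'].
have tu : u != t'.
  apply/eqP => ut; move: (HGsub _ (sub_Gamma_beta u) x xs).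
  by rewrite ut xt'.
have cut' : connect ET u t' by move: Ht'; rewrite inE.
have [c [euc cct]] := connect_first cut' tu.
apply: Hno; exists c; split => //; exists s; split => //.
apply: (guard_incl (Hg _ _ euc) (proj1 Hs)) xs _.
  exact: HGsub (sub_Gamma_out euc).
by apply/bigcupP; exists t' => //; rewrite inE.
Qed.


Lemma ok_weak (B B' : {set V}) s : B' \subset B -> ok B s -> ok B' s.
Proof.
move=> /subsetP sB [Hs Ha]; split => // x xs; apply/negP => /sB; apply/negP.
exact: Ha.
Qed.

Lemma gen t : forall B,
  (exists C : 'I_t -> seq V, (forall i, ok B (C i)) /\
      (forall i j, i != j -> [disjoint C i & C j]))
  \/ (exists A : {set V}, #|A| <= k * (t - 1) /\ ~ exists s, ok (B :|: A) s).
Proof.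
elim: t => [|t IH] B.
  by left; exists (fun _ => [::]); split => -[].
case: (classic (exists s, ok B s)) => Hex; last first.
  by right; exists set0; rewrite cards0 setU0; split.
have [X [G [HGk [C0 [HC0 C0X]] HXG]]] := key Hex.
case: (IH (B :|: X)) => [[C [HC Hdisj]]|[A' [HA' HnoA']]].
  left; exists (fun i : 'I_t.+1 => if insub (val i) is Some j then C j else C0).
  split.
    move=> i; case: insubP => [j _ _|_] //.
    apply: ok_weak (HC j); exact: subsetUl.
  have dC : forall j, [disjoint C j & C0].
    move=> j; apply/disjP => x xj x0; have [_ Ha] := HC j.
    by move: (Ha x xj); rewrite inE (C0X x x0) orbT.
  move=> i1 i2 ne; case: insubP => [j1 _ e1|n1]; case: insubP => [j2 _ e2|n2].
  - apply: Hdisj; apply: contra ne => /eqP ej.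
    by apply/eqP/val_inj; rewrite /= -e1 -e2 ej.
  - exact: dC.
  - by rewrite disjoint_sym; exact: dC.
  - case/negP: ne; apply/eqP/val_inj => /=.
    move: n1 n2 (ltn_ord i1) (ltn_ord i2); rewrite -!leqNgt => a b c d.
    apply/eqP; rewrite eqn_leq; apply/andP; split.
      by apply: leq_trans b; rewrite -ltnS.
    by apply: leq_trans a; rewrite -ltnS.
case: t IH HA' HnoA' => [|t] IH HA' HnoA'.
  left; exists (fun _ => C0); split => //.
  by move=> i j; rewrite (ord1 i) (ord1 j) eqxx.
right; exists (A' :|: G); split.
  rewrite cardsU; apply: leq_trans (leq_subr _ _) _.
  rewrite subSS subn0 mulnS addnC; apply: leq_add => //.
  by move: HA'; rewrite subSS subn0.
move=> [s Hs]; apply: HnoA'; exists s.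
have HsG : ok (B :|: G) s.
  apply: ok_weak Hs; apply/subsetP => x; rewrite !inE => /orP[->|->] //.
  by rewrite !orbT.
have [Hs1 Ha] := Hs; split => // x xs.
have := HXG s HsG x xs; have := Ha x xs.
by rewrite !inE !negb_or => /andP[-> /andP[-> _]] ->.
Qed.

End Main.

Theorem lemma3p1 (V : finType) (E : rel V) (k t : nat) :
  0 < k -> 0 < t -> dtw_lt E k ->
  (exists C : 'I_t -> seq V,
      (forall i, even_dicycle E (C i)) /\
      (forall i j, i != j -> [disjoint C i & C j]))
  \/
  (exists A : {set V}, #|A| <= k * (t - 1) /\
      ~ (exists s, even_dicycle (del_rel E A) s)).
Proof.
move=> _ _ [VT [ET [r [beta [gamma [Hd Hw]]]]]].
case: (gen Hd Hw t set0) => [[C [HC Hdisj]]|[A [HA Hno]]].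
  by left; exists C; split => // i; case: (HC i).
right; exists A; split => // [[s [[Hne Hu Hc] Hev]]]; apply: Hno; exists s.
rewrite set0U; split.
  split => //; split => //; apply: sub_cycle Hc => x y; by case/andP.
move=> x xs; have := next_cycle Hc xs.
by rewrite /del_rel => /and3P[].
Qed.
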